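(* Let $\pi_i:(X_i,T_i)\to(Y_i,S_i)$, $i=1,2$, be factor maps between topological dynamical systems. If both $\pi_1$ and $\pi_2$ are proximal, then the product map $\pi_1\times\pi_2:(X_1\times X_2,T_1\times T_2)\to(Y_1\times Y_2,S_1\times S_2)$ is proximal.
   Context: Systems: compact metric space with continuous surjection; factor map: continuous surjection intertwining the maps. A pair $x,y$ is proximal if $\liminf_{n\to\infty}\varrho(T^nx,T^ny)=0$. A factor map $\pi$ is proximal if every pair $x_1,x_2$ with $\pi(x_1)=\pi(x_2)$ is proximal. *)

(* Defs.v *)
From Stdlib Require Import Reals Lra.
Open Scope R_scope.

Record MetricSpace := {
  carrier :> Type;
  dist : carrier -> carrier -> R;
  dist_nonneg : forall x y, 0 <= dist x y;
  dist_sym : forall x y, dist x y = dist y x;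
  dist_refl : forall x, dist x x = 0;
  dist_eq : forall x y, dist x y = 0 -> x = y;
  dist_tri : forall x y z, dist x z <= dist x y + dist y z
}.
Arguments dist {m} _ _.

Definition compact (X : MetricSpace) : Prop :=
  forall u : nat -> X, exists (phi : nat -> nat) (l : X),
    (forall n, (phi n < phi (S n))%nat) /\
    (forall eps, 0 < eps -> exists N, forall n, (N <= n)%nat ->
        dist (u (phi n)) l < eps).

Definition continuous {X Y : MetricSpace} (f : X -> Y) : Prop :=
  forall x eps, 0 < eps -> exists delta, 0 < delta /\
    forall y, dist x y < delta -> dist (f x) (f y) < eps.

Definition surjective {A B : Type} (f : A -> B) : Prop :=
  forall b, exists a, f a = b.

Definition tds (X : MetricSpace) (T : X -> X) : Prop :=
  compact X /\ continuous T /\ surjective T.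

Definition factor_map (X : MetricSpace) (T : X -> X) (Y : MetricSpace) (S : Y -> Y)
  (pi : X -> Y) : Prop :=
  continuous pi /\ surjective pi /\ (forall x, pi (T x) = S (pi x)).

(** liminf_{n->oo} dist(T^n x, T^n y) = 0, written out (distances are >= 0). *)
Definition proximal_pair (X : MetricSpace) (T : X -> X) (x y : X) : Prop :=
  forall eps, 0 < eps -> forall N : nat, exists n : nat,
    (N <= n)%nat /\ dist (Nat.iter n T x) (Nat.iter n T y) < eps.

Definition proximal_factor (X : MetricSpace) (T : X -> X) (Y : MetricSpace) (S : Y -> Y)
  (pi : X -> Y) : Prop :=
  factor_map X T Y S pi /\
  (forall x1 x2, pi x1 = pi x2 -> proximal_pair X T x1 x2).

Section Prod.
Variables X Y : MetricSpace.
Definition prod_dist (p q : X * Y) : R :=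
  Rmax (dist (fst p) (fst q)) (dist (snd p) (snd q)).

Lemma prod_dist_nonneg p q : 0 <= prod_dist p q.
Proof. unfold prod_dist. eapply Rle_trans; [apply dist_nonneg|apply Rmax_l]. Qed.
Lemma prod_dist_sym p q : prod_dist p q = prod_dist q p.
Proof. unfold prod_dist. now rewrite (dist_sym _ (fst p)), (dist_sym _ (snd p)). Qed.
Lemma prod_dist_refl p : prod_dist p p = 0.
Proof. unfold prod_dist. rewrite !dist_refl. apply Rmax_left; lra. Qed.
Lemma prod_dist_eq p q : prod_dist p q = 0 -> p = q.
Proof.
  destruct p as [a b], q as [c d]; unfold prod_dist; simpl; intro H.
  pose proof (Rmax_l (dist a c) (dist b d)); pose proof (Rmax_r (dist a c) (dist b d)).
  pose proof (dist_nonneg _ a c); pose proof (dist_nonneg _ b d).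
  rewrite (dist_eq _ a c), (dist_eq _ b d); auto; lra.
Qed.
Lemma prod_dist_tri p q r : prod_dist p r <= prod_dist p q + prod_dist q r.
Proof.
  unfold prod_dist. apply Rmax_lub.
  - eapply Rle_trans; [apply dist_tri with (y := fst q)|].
    apply Rplus_le_compat; apply Rmax_l.
  - eapply Rle_trans; [apply dist_tri with (y := snd q)|].
    apply Rplus_le_compat; apply Rmax_r.
Qed.

Definition prod_ms : MetricSpace :=
  {| carrier := X * Y; dist := prod_dist;
     dist_nonneg := prod_dist_nonneg; dist_sym := prod_dist_sym;
     dist_refl := prod_dist_refl; dist_eq := prod_dist_eq;
     dist_tri := prod_dist_tri |}.
End Prod.

Definition prod_map {A B C D : Type} (f : A -> C) (g : B -> D) (p : A * B) : C * D :=
  (f (fst p), g (snd p)).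

(* Main.v *)
Require Import Defs.
From Stdlib Require Import Reals.
From Stdlib Require Import Lra Lia ClassicalEpsilon.
Open Scope R_scope.

Definition conv {X : MetricSpace} (u : nat -> X) (l : X) : Prop :=
  forall eps, 0 < eps -> exists N, forall n, (N <= n)%nat -> Defs.dist (u n) l < eps.

Lemma iter_cont (X : MetricSpace) (f : X -> X) m :
  continuous f -> continuous (Nat.iter m f).
Proof.
  intro Hf. induction m as [|m IH]; intros x eps He.
  - exists eps; split; auto.
  - simpl. destruct (Hf (Nat.iter m f x) eps He) as [d1 [Hd1 H1]].
    destruct (IH x d1 Hd1) as [d2 [Hd2 H2]].
    exists d2; split; auto.
Qed.

Lemma iter_factor {A B : Type} (T : A -> A) (S : B -> B) (pi : A -> B) :
  (forall x, pi (T x) = S (pi x)) -> forall n x, pi (Nat.iter n T x) = Nat.iter n S (pi x).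
Proof.
  intros H n x; induction n as [|n IH]; simpl; auto. rewrite H, IH; auto.
Qed.

Lemma iter_prod {A B : Type} (f : A -> A) (g : B -> B) n p :
  Nat.iter n (prod_map f g) p = (Nat.iter n f (fst p), Nat.iter n g (snd p)).
Proof.
  induction n as [|n IH]; simpl. destruct p; auto.
  rewrite IH. reflexivity.
Qed.

Lemma phi_ge (phi : nat -> nat) : (forall n, (phi n < phi (S n))%nat) -> forall n, (n <= phi n)%nat.
Proof. intros H n; induction n; [lia|]. specialize (H n); lia. Qed.

Lemma conv_sub {X : MetricSpace} (u : nat -> X) l phi :
  conv u l -> (forall n, (phi n < phi (S n))%nat) -> conv (fun n => u (phi n)) l.
Proof.
  intros Hu Hp eps He. destruct (Hu eps He) as [N HN]. exists N; intros n Hn.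
  apply HN. pose proof (phi_ge phi Hp n); lia.
Qed.

Lemma zero_lemma a : 0 <= a -> (forall eps, 0 < eps -> a < eps) -> a = 0.
Proof.
  intros H0 H. destruct (Rle_lt_or_eq_dec 0 a H0) as [Hl|]; auto.
  specialize (H (a/2)); lra.
Qed.

Lemma conv_fiber {X Y : MetricSpace} (pi : X -> Y) (u v : nat -> X) l l' :
  continuous pi -> conv u l -> conv v l' -> (forall n, pi (u n) = pi (v n)) ->
  pi l = pi l'.
Proof.
  intros Hc Hu Hv Hf. apply Defs.dist_eq, zero_lemma; [apply Defs.dist_nonneg|].
  intros eps He.
  destruct (Hc l (eps/2)) as [d1 [Hd1 H1]]; [lra|].
  destruct (Hc l' (eps/2)) as [d2 [Hd2 H2]]; [lra|].
  destruct (Hu d1 Hd1) as [N1 HN1]. destruct (Hv d2 Hd2) as [N2 HN2].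
  pose (n := (N1 + N2)%nat).
  assert (A1 := H1 (u n) ltac:(rewrite Defs.dist_sym; apply HN1; unfold n; lia)).
  assert (A2 := H2 (v n) ltac:(rewrite Defs.dist_sym; apply HN2; unfold n; lia)).
  pose proof (Defs.dist_tri _ (pi l) (pi (u n)) (pi l')).
  rewrite Hf in H, A1. rewrite Defs.dist_sym in A2. lra.
Qed.

Lemma inv_small eps : 0 < eps -> exists K, forall k, (K <= k)%nat -> / (INR k + 1) < eps.
Proof.
  intros He. destruct (archimed_cor1 eps He) as [K [HK HK0]]. exists K; intros k Hk.
  eapply Rle_lt_trans; [|exact HK].
  apply Rinv_le_contravar. apply lt_0_INR; lia.
  pose proof (le_INR _ _ Hk); lra.
Qed.

Lemma prod_cont (A B C D : MetricSpace) (f : A -> C) (g : B -> D) :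
  continuous f -> continuous g ->
  @continuous (prod_ms A B) (prod_ms C D) (prod_map f g).
Proof.
  intros Hf Hg [a b] eps He.
  destruct (Hf a eps He) as [d1 [Hd1 H1]]. destruct (Hg b eps He) as [d2 [Hd2 H2]].
  exists (Rmin d1 d2); split. apply Rmin_glb_lt; auto.
  intros [c d] Hy. simpl in *. unfold prod_dist in *; simpl in *.
  apply Rmax_lub_lt.
  - apply H1. eapply Rle_lt_trans; [apply Rmax_l|]. eapply Rlt_le_trans; [exact Hy|apply Rmin_l].
  - apply H2. eapply Rle_lt_trans; [apply Rmax_r|]. eapply Rlt_le_trans; [exact Hy|apply Rmin_r].
Qed.

Theorem lemma4p3
  (X1 Y1 X2 Y2 : MetricSpace)
  (T1 : X1 -> X1) (S1 : Y1 -> Y1) (T2 : X2 -> X2) (S2 : Y2 -> Y2)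
  (pi1 : X1 -> Y1) (pi2 : X2 -> Y2)
  (hX1 : tds X1 T1) (hY1 : tds Y1 S1) (hX2 : tds X2 T2) (hY2 : tds Y2 S2)
  (hp1 : proximal_factor X1 T1 Y1 S1 pi1)
  (hp2 : proximal_factor X2 T2 Y2 S2 pi2) :
  proximal_factor (prod_ms X1 X2) (prod_map T1 T2)
                  (prod_ms Y1 Y2) (prod_map S1 S2) (prod_map pi1 pi2).
Proof.
  destruct hX1 as [K1 [C1 _]]. destruct hX2 as [K2 [C2 _]].
  destruct hp1 as [[Cp1 [Sp1 E1]] P1]. destruct hp2 as [[Cp2 [Sp2 E2]] P2].
  split; [split; [|split]|].
  - apply prod_cont; auto.
  - intros [a b]. destruct (Sp1 a) as [c Hc]. destruct (Sp2 b) as [d Hd].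
    exists (c, d). unfold prod_map; simpl; now rewrite Hc, Hd.
  - intros [a b]. unfold prod_map; simpl. now rewrite E1, E2.
  - intros [x1 x2] [x1' x2'] Hpi. unfold prod_map in Hpi; simpl in Hpi.
    injection Hpi as Hf1 Hf2.
    intros eps He N.
    assert (Hex : forall k : nat, exists n, Defs.dist (Nat.iter n T1 x1) (Nat.iter n T1 x1') < / (INR k + 1)).
    { intro k. destruct (P1 x1 x1' Hf1 (/ (INR k + 1)) ltac:(apply Rinv_0_lt_compat; pose proof (pos_INR k); lra) 0%nat) as [n [_ Hn]].
      eauto. }
    pose (nk := fun k => proj1_sig (constructive_indefinite_description _ (Hex k))).
    assert (Hnk : forall k, Defs.dist (Nat.iter (nk k) T1 x1) (Nat.iter (nk k) T1 x1') < / (INR k + 1)).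
    { intro k. unfold nk. destruct (constructive_indefinite_description _ (Hex k)); simpl; auto. }
    destruct (K1 (fun k => Nat.iter (nk k) T1 x1)) as [ph1 [z1 [Hph1 Hz1]]].
    destruct (K2 (fun k => Nat.iter (nk (ph1 k)) T2 x2)) as [ph2 [z2 [Hph2 Hz2]]].
    destruct (K2 (fun k => Nat.iter (nk (ph1 (ph2 k))) T2 x2')) as [ph3 [z2' [Hph3 Hz2']]].
    pose (psi := fun k => ph1 (ph2 (ph3 k))).
    pose (mk := fun k => nk (psi k)).
    assert (Hpsi : forall k, (k <= psi k)%nat).
    { intro k. unfold psi. pose proof (phi_ge _ Hph1 (ph2 (ph3 k))).
      pose proof (phi_ge _ Hph2 (ph3 k)). pose proof (phi_ge _ Hph3 k). lia. }
    assert (A1 : conv (fun k => Nat.iter (mk k) T1 x1) z1).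
    { intros e He'. destruct (Hz1 e He') as [M HM]. exists M; intros n Hn.
      apply HM. unfold psi. pose proof (phi_ge _ Hph2 (ph3 n)). pose proof (phi_ge _ Hph3 n). lia. }
    assert (A2 : conv (fun k => Nat.iter (mk k) T2 x2) z2).
    { intros e He'. destruct (Hz2 e He') as [M HM]. exists M; intros n Hn.
      apply HM. pose proof (phi_ge _ Hph3 n). lia. }
    assert (A2' : conv (fun k => Nat.iter (mk k) T2 x2') z2').
    { intros e He'. destruct (Hz2' e He') as [M HM]. exists M; intros n Hn.
      apply HM. lia. }
    assert (A1' : conv (fun k => Nat.iter (mk k) T1 x1') z1).
    { intros e He'. destruct (A1 (e/2)) as [M HM]; [lra|].
      destruct (inv_small (e/2)) as [M' HM']; [lra|].
      exists (M + M')%nat; intros n Hn.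
      pose proof (Defs.dist_tri _ (Nat.iter (mk n) T1 x1') (Nat.iter (mk n) T1 x1) z1).
      rewrite (Defs.dist_sym _ (Nat.iter (mk n) T1 x1') (Nat.iter (mk n) T1 x1)) in H.
      assert (B1 := HM n ltac:(lia)).
      assert (B2 := Hnk (psi n)). assert (B3 := HM' (psi n) ltac:(pose proof (Hpsi n); lia)).
      fold (mk n) in B2. simpl in B1. lra. }
    assert (Hz : pi2 z2 = pi2 z2').
    { apply (conv_fiber pi2 _ _ z2 z2' Cp2 A2 A2').
      intro n. rewrite !(iter_factor T2 S2 pi2 E2). now rewrite Hf2. }
    destruct (P2 z2 z2' Hz (eps/3) ltac:(lra) N) as [m [Hm Hmd]].
    destruct (iter_cont _ T1 m C1 z1 (eps/2)) as [d1 [Hd1 H1]]; [lra|].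
    destruct (iter_cont _ T2 m C2 z2 (eps/3)) as [d2 [Hd2 H2]]; [lra|].
    destruct (iter_cont _ T2 m C2 z2' (eps/3)) as [d3 [Hd3 H3]]; [lra|].
    destruct (A1 d1 Hd1) as [M1 HM1]. destruct (A1' d1 Hd1) as [M2 HM2].
    destruct (A2 d2 Hd2) as [M3 HM3]. destruct (A2' d3 Hd3) as [M4 HM4].
    pose (k := (M1 + M2 + M3 + M4)%nat).
    exists (m + mk k)%nat. split; [lia|].
    simpl. unfold prod_dist. rewrite !iter_prod. simpl.
    rewrite !Nat.iter_add.
    specialize (HM1 k ltac:(unfold k; lia)). specialize (HM2 k ltac:(unfold k; lia)).
    specialize (HM3 k ltac:(unfold k; lia)). specialize (HM4 k ltac:(unfold k; lia)).
    simpl in HM1, HM2, HM3, HM4.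
    rewrite Defs.dist_sym in HM1, HM2, HM3, HM4.
    specialize (H1 _ HM1) as G1. specialize (H1 _ HM2) as G2.
    specialize (H2 _ HM3) as G3. specialize (H3 _ HM4) as G4.
    apply Rmax_lub_lt.
    + pose proof (Defs.dist_tri _ (Nat.iter m T1 (Nat.iter (mk k) T1 x1)) (Nat.iter m T1 z1)
                    (Nat.iter m T1 (Nat.iter (mk k) T1 x1'))).
      rewrite Defs.dist_sym in G1. lra.
    + pose proof (Defs.dist_tri _ (Nat.iter m T2 (Nat.iter (mk k) T2 x2)) (Nat.iter m T2 z2)
                    (Nat.iter m T2 (Nat.iter (mk k) T2 x2'))).
      pose proof (Defs.dist_tri _ (Nat.iter m T2 z2) (Nat.iter m T2 z2')
                    (Nat.iter m T2 (Nat.iter (mk k) T2 x2'))).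
      rewrite Defs.dist_sym in G3. lra.
Qed.
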